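(* Consider problem (P) and suppose Assumptions A and B hold. Let $\{x^t\}$ be generated by SCP$_{ls}$ and, for each $t$, let $\lambda^t\in\mathbb R^m_+$ be a Lagrange multiplier of the subproblem at iteration $t$ with $(\tilde L_f,\tilde L_g)=(L_f^t,L_g^t)$. Then $\{\lambda^t\}$ is bounded, and every accumulation point of $\{x^t\}$ is a stationary point of (P).
   Context: Problem (P): $\min_{x\in\mathbb R^n}F(x):=f(x)+P_1(x)-P_2(x)+\delta_{\{g\le 0\}}(x)$, where $f:\mathbb R^n\to\mathbb R$ is continuously differentiable, $P_1,P_2:\mathbb R^n\to\mathbb R$ are convex and continuous, $g=(g_1,\dots,g_m):\mathbb R^n\to\mathbb R^m$ is continuous with $\{x:g(x)\le0\}\neq\emptyset$ (componentwise inequalities), $\delta_C$ the indicator function of $C$. Assumption A: (i) $\nabla f$ is Lipschitz with modulus $L_f$; (ii) each $g_i$ is differentiable with $\nabla g_i$ Lipschitz with modulus $L_{g_i}$; (iii) $F$ is level-bounded. Assumption B (MFCQ): each $g_i$ is continuously differentiable and for every $x$ with $g(x)\le0$ there is $d$ with $\langle\nabla g_i(x),d\rangle<0$ for all $i\in I(x):=\{j:g_j(x)=0\}$. Stationary point: $x$ is a stationary point of (P) if there exists $\lambda\in\mathbb R^m_+$ with $g(x)\le0$, $\lambda_ig_i(x)=0$ for all $i$, and $0\in\nabla f(x)+\partial P_1(x)-\partial P_2(x)+\sum_{i=1}^m\lambda_i\nabla g_i(x)$ (convex subdifferentials). $\bar G(x,y,w)\in\mathbb R^m$ has components $\bar G_i(x,y,w)=g_i(y)+\langle\nabla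 g_i(y),x-y\rangle+\frac{w_i}{2}\|x-y\|^2$. Algorithm SCP$_{ls}$: fix $c>0$, $0<\underline L<\bar L$, $\tau>1$ and $x^0$ with $g(x^0)\le0$. For $t=0,1,2,\dots$: (1) pick any $\xi^t\in\partial P_2(x^t)$; (2) choose $L_f^{t,0}\in[\underline L,\bar L]$, $L_g^{t,0}\in[\underline L,\bar L]^m$ arbitrarily, set $\tilde L_f=L_f^{t,0}$, $\tilde L_g=L_g^{t,0}$; (3) compute $\tilde x$ solving: minimize $\langle\nabla f(x^t)-\xi^t,x-x^t\rangle+\frac{\tilde L_f}{2}\|x-x^t\|^2+P_1(x)$ subject to $\bar G(x,x^t,\tilde L_g)\le0$. If $g(\tilde x)\le0$ and $F(\tilde x)\le F(x^t)-\frac c2\|\tilde x-x^t\|^2$, set $x^{t+1}=\tilde x$, $L_f^t=\tilde L_f$, $L_g^t=\tilde L_g$ and go to iteration $t+1$; otherwise, if $g(\tilde x)\not\le0$ replace $\tilde L_g$ by $\tau\tilde L_g$, while if $g(\tilde x)\le0$ but the decrease inequality fails replace $\tilde L_f$ by $\tau\tilde L_f$, and repeat step (3). A Lagrange multiplier of the subproblem at iteration $t$ with $(L_f^t,L_g^t)$ is a vector $\lambda\in\mathbb R^m_+$ such that $x^{t+1}$ minimizes $x\mapsto\langle\nabla f(x^t)-\xi^t,x-x^t\rangle+\frac{L_f^t}{2}\|x-x^t\|^2+P_1(x)+\langle\lambda,\bar G(x,x^t,L_g^t)\rangle$ and $\lambda_i\bar G_i(x^{t+1},x^t,L_g^t)=0$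 for all $i$ (such multipliers exist under Assumptions A and B). *)

(* Defs.v *)
From Stdlib Require Import Reals.
From mathcomp Require Import ssreflect ssrfun ssrbool eqtype ssrnat seq fintype bigop.
Open Scope R_scope.

Definition Vec (n : nat) : Type := 'I_n -> R.

Definition vadd {n} (x y : Vec n) : Vec n := fun i => x i + y i.
Definition vsub {n} (x y : Vec n) : Vec n := fun i => x i - y i.
Definition dot {n} (x y : Vec n) : R := \big[Rplus/0]_(i < n) (x i * y i).
Definition norm {n} (x : Vec n) : R := sqrt (dot x x).

Definition cont {n} (h : Vec n -> R) : Prop :=
  forall x eps, 0 < eps -> exists delta, 0 < delta /\
    forall y, norm (vsub y x) < delta -> Rabs (h y - h x) < eps.

Definition cont_vec {n} (G : Vec n -> Vec n) : Prop :=
  forall x eps, 0 < eps -> exists delta, 0 < delta /\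
    forall y, norm (vsub y x) < delta -> norm (vsub (G y) (G x)) < eps.

Definition has_gradient {n} (h : Vec n -> R) (dh : Vec n -> Vec n) : Prop :=
  forall x eps, 0 < eps -> exists delta, 0 < delta /\
    forall u, norm u < delta ->
      Rabs (h (vadd x u) - h x - dot (dh x) u) <= eps * norm u.

Definition lipschitz_vec {n} (G : Vec n -> Vec n) (L : R) : Prop :=
  forall x y, norm (vsub (G x) (G y)) <= L * norm (vsub x y).

Definition convex_fun {n} (h : Vec n -> R) : Prop :=
  forall x y a, 0 <= a <= 1 ->
    h (fun i => a * x i + (1 - a) * y i) <= a * h x + (1 - a) * h y.

Definition subdiff {n} (h : Vec n -> R) (x v : Vec n) : Prop :=
  forall y, h x + dot v (vsub y x) <= h y.

Definition feasible {n m} (g : 'I_m -> Vec n -> R) (x : Vec n) : Prop :=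
  forall i, g i x <= 0.

(* finite part of F = f + P1 - P2 (F = +oo outside the feasible set) *)
Definition Fval {n} (f P1 P2 : Vec n -> R) (x : Vec n) : R := f x + P1 x - P2 x.

Definition level_bounded {n m} (f P1 P2 : Vec n -> R) (g : 'I_m -> Vec n -> R) : Prop :=
  forall alpha, exists B, forall x,
    feasible g x -> Fval f P1 P2 x <= alpha -> norm x <= B.

Definition MFCQ {n m} (g : 'I_m -> Vec n -> R) (dg : 'I_m -> Vec n -> Vec n) : Prop :=
  forall x, feasible g x -> exists d : Vec n,
    forall i, g i x = 0 -> dot (dg i x) d < 0.

Definition stationary {n m} (f : Vec n -> R) (df : Vec n -> Vec n) (P1 P2 : Vec n -> R)
  (g : 'I_m -> Vec n -> R) (dg : 'I_m -> Vec n -> Vec n) (x : Vec n) : Prop :=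
  exists lam : 'I_m -> R,
    (forall i, 0 <= lam i) /\ feasible g x /\ (forall i, lam i * g i x = 0) /\
    exists u1 u2 : Vec n, subdiff P1 x u1 /\ subdiff P2 x u2 /\
      forall j, df x j + u1 j - u2 j + \big[Rplus/0]_(i < m) (lam i * dg i x j) = 0.

Definition Gbar {n m} (g : 'I_m -> Vec n -> R) (dg : 'I_m -> Vec n -> Vec n)
  (x y : Vec n) (w : 'I_m -> R) (i : 'I_m) : R :=
  g i y + dot (dg i y) (vsub x y) + w i / 2 * dot (vsub x y) (vsub x y).

Definition subobj {n} (df : Vec n -> Vec n) (P1 : Vec n -> R)
  (xt xi : Vec n) (Lf : R) (x : Vec n) : R :=
  dot (vsub (df xt) xi) (vsub x xt) + Lf / 2 * dot (vsub x xt) (vsub x xt) + P1 x.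

Definition solves_sub {n m} (df : Vec n -> Vec n) (P1 : Vec n -> R)
  (g : 'I_m -> Vec n -> R) (dg : 'I_m -> Vec n -> Vec n)
  (xt xi : Vec n) (Lf : R) (Lg : 'I_m -> R) (z : Vec n) : Prop :=
  (forall i, Gbar g dg z xt Lg i <= 0) /\
  forall x, (forall i, Gbar g dg x xt Lg i <= 0) ->
    subobj df P1 xt xi Lf z <= subobj df P1 xt xi Lf x.

Definition sub_multiplier {n m} (df : Vec n -> Vec n) (P1 : Vec n -> R)
  (g : 'I_m -> Vec n -> R) (dg : 'I_m -> Vec n -> Vec n)
  (xt xi : Vec n) (Lf : R) (Lg : 'I_m -> R) (z : Vec n) (lam : 'I_m -> R) : Prop :=
  (forall i, 0 <= lam i) /\
  (forall x, subobj df P1 xt xi Lf z + \big[Rplus/0]_(i < m) (lam i * Gbar g dg z xt Lg i)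
             <= subobj df P1 xt xi Lf x + \big[Rplus/0]_(i < m) (lam i * Gbar g dg x xt Lg i)) /\
  (forall i, lam i * Gbar g dg z xt Lg i = 0).

(* For iteration t the line
   search performs trials k = 0..K t with parameters (Lft t k, Lgt t k) and
   trial points xtr t k; the last trial is accepted and gives x (t+1).
   The final parameters (L_f^t, L_g^t) are (Lft t (K t), Lgt t (K t)). *)
Definition SCPls_run {n m} (f : Vec n -> R) (df : Vec n -> Vec n) (P1 P2 : Vec n -> R)
  (g : 'I_m -> Vec n -> R) (dg : 'I_m -> Vec n -> Vec n)
  (c Lmin Lmax tau : R)
  (x : nat -> Vec n) (xi : nat -> Vec n) (K : nat -> nat)
  (Lft : nat -> nat -> R) (Lgt : nat -> nat -> 'I_m -> R)
  (xtr : nat -> nat -> Vec n) : Prop :=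
  let accepted t z :=
    feasible g z /\
    Fval f P1 P2 z <= Fval f P1 P2 (x t) - c / 2 * dot (vsub z (x t)) (vsub z (x t)) in
  feasible g (x 0%nat) /\
  forall t : nat,
    subdiff P2 (x t) (xi t) /\
    (Lmin <= Lft t 0%nat <= Lmax) /\ (forall i, Lmin <= Lgt t 0%nat i <= Lmax) /\
    (forall k : nat, (k <= K t)%N ->
       solves_sub df P1 g dg (x t) (xi t) (Lft t k) (Lgt t k) (xtr t k)) /\
    (forall k : nat, (k < K t)%N ->
       ~ accepted t (xtr t k) /\
       (~ feasible g (xtr t k) ->
          Lgt t k.+1 = (fun i => tau * Lgt t k i) /\ Lft t k.+1 = Lft t k) /\
       (feasible g (xtr t k) ->
          Lft t k.+1 = tau * Lft t k /\ Lgt t k.+1 = Lgt t k)) /\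
    accepted t (xtr t (K t)) /\
    x t.+1 = xtr t (K t).

Definition accumulation_point {n} (x : nat -> Vec n) (xs : Vec n) : Prop :=
  forall eps N, 0 < eps -> exists t, (N <= t)%N /\ norm (vsub (x t) xs) < eps.

(* Main.v *)
Require Import Defs.
From Stdlib Require Import Reals.
From mathcomp Require Import ssreflect ssrfun ssrbool eqtype ssrnat seq fintype bigop.
From Stdlib Require Import Lra Psatz Classical ClassicalEpsilon FunctionalExtensionality.
From HB Require Import structures.
Open Scope R_scope.

HB.instance Definition _ := Monoid.isComLaw.Build R 0 Rplus
  (fun a b c => esym (Rplus_assoc a b c)) Rplus_comm Rplus_0_l.

Notation sR := (fun (I : Type) (r : seq I) (F : I -> R) => \big[Rplus/0]_(i <- r) F i).

Section Sums.
Variable I : finType.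

Lemma bs_scal (a : R) (F : I -> R) :
  \big[Rplus/0]_(i : I) (a * F i) = a * \big[Rplus/0]_(i : I) F i.
Proof. elim: (index_enum I) => [|x r IH]; rewrite ?big_nil ?big_cons /=; lra. Qed.

Lemma bs_add (F G : I -> R) :
  \big[Rplus/0]_(i : I) (F i + G i) = \big[Rplus/0]_(i : I) F i + \big[Rplus/0]_(i : I) G i.
Proof. elim: (index_enum I) => [|x r IH]; rewrite ?big_nil ?big_cons /=; lra. Qed.

Lemma bs_sub (F G : I -> R) :
  \big[Rplus/0]_(i : I) (F i - G i) = \big[Rplus/0]_(i : I) F i - \big[Rplus/0]_(i : I) G i.
Proof. elim: (index_enum I) => [|x r IH]; rewrite ?big_nil ?big_cons /=; lra. Qed.

Lemma bs_le (F G : I -> R) : (forall i, F i <= G i) ->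
  \big[Rplus/0]_(i : I) F i <= \big[Rplus/0]_(i : I) G i.
Proof. move=> H; elim: (index_enum I) => [|x r IH]; rewrite ?big_nil ?big_cons /=;
  [lra| have := H x; lra]. Qed.

Lemma bs_zero (F : I -> R) : (forall i, F i = 0) -> \big[Rplus/0]_(i : I) F i = 0.
Proof. move=> H; elim: (index_enum I) => [|x r IH]; rewrite ?big_nil ?big_cons /= ?H; lra. Qed.

Lemma bs_abs (F : I -> R) : Rabs (\big[Rplus/0]_(i : I) F i) <= \big[Rplus/0]_(i : I) Rabs (F i).
Proof. elim: (index_enum I) => [|x r IH]; rewrite ?big_nil ?big_cons /=.
  rewrite Rabs_R0; lra. have := Rabs_triang (F x) (\big[Rplus/0]_(j <- r) F j); lra. Qed.

Lemma bs_const (a : R) : \big[Rplus/0]_(i : I) a = INR (size (index_enum I)) * a.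
Proof. elim: (index_enum I) => [|x r IH]; rewrite ?big_nil ?big_cons /= ?IH.
  lra. case: (size r) => [|k] /=; [lra|]. rewrite -S_INR S_INR; lra. Qed.

Lemma bs_pick (F : I -> R) (j : I) :
  \big[Rplus/0]_(i : I) (F i * (if i == j then 1 else 0)) = F j.
Proof.
  rewrite (bigD1 j) //= eqxx Rmult_1_r big1; first lra.
  by move=> i /negbTE ->; rewrite Rmult_0_r.
Qed.

Lemma bs_pos_D1 (F : I -> R) (j : I) : (forall i, 0 <= F i) -> F j <= \big[Rplus/0]_(i : I) F i.
Proof.
  move=> H; rewrite (bigD1 j) //=.
  have : 0 <= \big[Rplus/0]_(i | i != j) F i.
    elim/big_ind: _ => //; [lra| move=> a b; lra].
  lra.
Qed.
End Sums.
Arguments bs_scal {I}. Arguments bs_add {I}. Arguments bs_sub {I}. Arguments bs_le {I}.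
Arguments bs_zero {I}. Arguments bs_abs {I}. Arguments bs_const {I}. Arguments bs_pick {I}. Arguments bs_pos_D1 {I}.

Definition kk (n : nat) : R := INR (size (index_enum 'I_n)).
Lemma kk_pos n : 0 <= kk n. Proof. apply pos_INR. Qed.

Section VecLemmas.
Variable n : nat.
Implicit Types a b c x y w d : Vec n.

Lemma dot_comm a b : dot a b = dot b a.
Proof. rewrite /dot; apply eq_bigr => i _; lra. Qed.

Lemma dot_nonneg a : 0 <= dot a a.
Proof. rewrite /dot. have := bs_le (fun _ => 0) (fun i : 'I_n => a i * a i).
  rewrite bs_zero //. move=> H; apply H => i; nra. Qed.

Lemma dot_sub_l a b c : dot (vsub a b) c = dot a c - dot b c.
Proof. rewrite /dot -bs_sub; apply eq_bigr => i _; rewrite /vsub; lra. Qed.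

Lemma dot_add_l a b c : dot (vadd a b) c = dot a c + dot b c.
Proof. rewrite /dot -bs_add; apply eq_bigr => i _; rewrite /vadd; lra. Qed.

Lemma dot_sub_r a b c : dot c (vsub a b) = dot c a - dot c b.
Proof. by rewrite dot_comm dot_sub_l !(dot_comm c). Qed.

Lemma dot_scal_r s a b : dot a (fun i => s * b i) = s * dot a b.
Proof. rewrite /dot -bs_scal; apply eq_bigr => i _; lra. Qed.

Lemma dot_scal_l s a b : dot (fun i => s * a i) b = s * dot a b.
Proof. rewrite /dot -bs_scal; apply eq_bigr => i _; lra. Qed.

Lemma dot_zero_r a : dot a (fun _ => 0) = 0.
Proof. rewrite /dot bs_zero // => i; lra. Qed.

Lemma vsub_xx x : vsub x x = (fun _ => 0).
Proof. apply functional_extensionality => i; rewrite /vsub; lra. Qed.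

Lemma norm_nonneg a : 0 <= norm a.
Proof. apply sqrt_pos. Qed.

Lemma norm_sq a : norm a * norm a = dot a a.
Proof. rewrite /norm sqrt_sqrt //; apply dot_nonneg. Qed.

Lemma coord_sq a i : a i * a i <= dot a a.
Proof. rewrite /dot. apply (bs_pos_D1 (fun j : 'I_n => a j * a j)) => j; nra. Qed.

Lemma coord_le_norm a i : Rabs (a i) <= norm a.
Proof.
  have h1 := coord_sq a i. have h2 := norm_sq a. have h3 := norm_nonneg a.
  apply Rsqr_incr_0_var; rewrite /Rsqr; last lra.
  rewrite -Rabs_mult Rabs_right; nra.
Qed.

Lemma dot_bound a b : Rabs (dot a b) <= kk n * norm a * norm b.
Proof.
  rewrite /dot. eapply Rle_trans; first apply bs_abs.
  rewrite Rmult_assoc /kk -bs_const. apply bs_le => i.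
  rewrite Rabs_mult. apply Rmult_le_compat; try apply Rabs_pos; apply coord_le_norm.
Qed.

Lemma small_norm eps : 0 < eps -> exists del, 0 < del /\
  forall w, (forall i, Rabs (w i) < del) -> norm w < eps.
Proof.
  move=> He. have hk := kk_pos n.
  exists (eps / (kk n + 1)); split; first (apply Rdiv_lt_0_compat; lra).
  move=> w Hw.
  have Hd : dot w w <= kk n * (eps / (kk n + 1) * (eps / (kk n + 1))).
    rewrite /kk -bs_const /dot. apply bs_le => i. have := Hw i.
    have := Rabs_pos (w i).
    have -> : w i * w i = Rabs (w i) * Rabs (w i).
      rewrite -Rabs_mult Rabs_right //; nra.
    move=> h0 h1. set del := eps / (kk n + 1) in h1 *. nra.
  have Hq : kk n * (eps / (kk n + 1) * (eps / (kk n + 1))) < eps * eps.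
    have -> : kk n * (eps / (kk n + 1) * (eps / (kk n + 1))) =
              eps * eps * (kk n / ((kk n + 1) * (kk n + 1))) by field; lra.
    have : kk n / ((kk n + 1) * (kk n + 1)) < 1.
      apply (Rmult_lt_reg_r ((kk n + 1) * (kk n + 1))); first nra.
      rewrite /Rdiv Rmult_assoc Rinv_l; nra.
    set q := kk n / _. move=> hq. have : 0 < eps * eps by nra. nra.
  rewrite /norm. rewrite -(sqrt_square eps); last lra.
  apply sqrt_lt_1; [apply dot_nonneg| nra| lra].
Qed.

Lemma norm_scal s d : norm (fun i => s * d i) = Rabs s * norm d.
Proof.
  rewrite /norm dot_scal_l dot_scal_r -Rmult_assoc sqrt_mult; first last.
  apply dot_nonneg. nra. by rewrite -/(Rsqr s) sqrt_Rsqr_abs.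
Qed.

Definition ev (i : 'I_n) : Vec n := fun j => if j == i then 1 else 0.

Lemma dot_ev a i : dot a (ev i) = a i.
Proof. rewrite /dot /ev. exact: (bs_pick (fun j => a j)). Qed.

End VecLemmas.
Arguments ev {n}. Arguments dot_comm {n}. Arguments dot_nonneg {n}. Arguments dot_sub_l {n}. Arguments dot_add_l {n}. Arguments dot_sub_r {n}. Arguments dot_scal_r {n}. Arguments dot_scal_l {n}. Arguments dot_zero_r {n}. Arguments vsub_xx {n}. Arguments norm_nonneg {n}. Arguments norm_sq {n}. Arguments coord_sq {n}. Arguments coord_le_norm {n}. Arguments dot_bound {n}. Arguments small_norm {n}. Arguments norm_scal {n}. Arguments dot_ev {n}.

Lemma cv_sub_seq (u : nat -> R) l (T : nat -> nat) :
  Un_cv u l -> (forall j, (j <= T j)%coq_nat) -> Un_cv (fun j => u (T j)) l.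
Proof.
  move=> H HT eps He. have [N HN] := H eps He. exists N => j Hj. apply HN.
  have := HT j. lia.
Qed.

Arguments cv_sub_seq {u l T}.
Lemma cv_const (a : R) : Un_cv (fun _ => a) a.
Proof. move=> eps He; exists 0%nat => j _; rewrite /R_dist Rminus_diag Rabs_R0; lra. Qed.

Lemma ev_all_seq (I : eqType) (s : seq I) (P : I -> nat -> Prop) :
  (forall i, exists N, forall j, (j >= N)%coq_nat -> P i j) ->
  exists N, forall j, (j >= N)%coq_nat -> forall i, i \in s -> P i j.
Proof.
  move=> H; elim: s => [|a s [N HN]].
    by exists 0%nat => j _ i.
  have [Na HNa] := H a. exists (Nat.max N Na) => j Hj i.
  rewrite in_cons => /orP [/eqP -> | Hi]. apply HNa; lia. apply HN => //; lia.
Qed.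

Lemma ev_all (I : finType) (P : I -> nat -> Prop) :
  (forall i, exists N, forall j, (j >= N)%coq_nat -> P i j) ->
  exists N, forall j, (j >= N)%coq_nat -> forall i, P i j.
Proof.
  move=> H. have [N HN] := @ev_all_seq I (enum I) P H. exists N => j Hj i.
  apply HN => //. by rewrite mem_enum.
Qed.

Lemma cv_bsum_seq (I : Type) (r : seq I) (F : nat -> I -> R) (L : I -> R) :
  (forall i, Un_cv (fun j => F j i) (L i)) ->
  Un_cv (fun j => \big[Rplus/0]_(i <- r) F j i) (\big[Rplus/0]_(i <- r) L i).
Proof.
  move=> H; elim: r => [|a r IH].
    rewrite big_nil. have := cv_const 0. apply: Un_cv_ext => j; by rewrite big_nil.
  rewrite big_cons. have := CV_plus _ _ _ _ (H a) IH. apply: Un_cv_ext => j.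
  by rewrite big_cons.
Qed.

Lemma cv_bsum (I : finType) (F : nat -> I -> R) (L : I -> R) :
  (forall i, Un_cv (fun j => F j i) (L i)) ->
  Un_cv (fun j => \big[Rplus/0]_(i : I) F j i) (\big[Rplus/0]_(i : I) L i).
Proof. exact: cv_bsum_seq. Qed.

Definition cvv {I : Type} (u : nat -> I -> R) (l : I -> R) := forall i, Un_cv (fun j => u j i) (l i).

Lemma cv_dot n (a b : nat -> Vec n) la lb : cvv a la -> cvv b lb ->
  Un_cv (fun j => dot (a j) (b j)) (dot la lb).
Proof. move=> Ha Hb. apply: cv_bsum => i. exact: CV_mult. Qed.

Lemma cvv_norm n (u : nat -> Vec n) l : cvv u l ->
  forall eps, 0 < eps -> exists N, forall j, (j >= N)%coq_nat -> norm (vsub (u j) l) < eps.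
Proof.
  move=> H eps He. have [del [Hd Hw]] := small_norm (n:=n) eps He.
  have [N HN] := @ev_all _ (fun i j => Rabs (u j i - l i) < del) (fun i => H i del Hd).
  exists N => j Hj. apply Hw => i. exact: HN.
Qed.

Arguments cvv_norm {n u l}.

Lemma cv_cont n (h : Vec n -> R) (u : nat -> Vec n) l : cont h -> cvv u l ->
  Un_cv (fun j => h (u j)) (h l).
Proof.
  move=> Hh Hu eps He. have [del [Hd Hdel]] := Hh l eps He.
  have [N HN] := cvv_norm Hu del Hd. exists N => j Hj. rewrite /R_dist. apply Hdel. exact: HN.
Qed.

Lemma cv_contv n (G : Vec n -> Vec n) (u : nat -> Vec n) l : cont_vec G -> cvv u l ->
  cvv (fun j => G (u j)) (G l).
Proof.
  move=> Hh Hu i eps He. have [del [Hd Hdel]] := Hh l eps He.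
  have [N HN] := cvv_norm Hu del Hd. exists N => j Hj. rewrite /R_dist.
  eapply Rle_lt_trans; last apply (Hdel _ (HN j Hj)).
  exact: (coord_le_norm (vsub (G (u j)) (G l)) i).
Qed.

Lemma cvv_vsub {I : Type} (a b : nat -> I -> R) la lb : cvv a la -> cvv b lb ->
  cvv (fun j i => a j i - b j i) (fun i => la i - lb i).
Proof. move=> Ha Hb i. exact: CV_minus. Qed.

Lemma cv_le0 (u : nat -> R) l : Un_cv u l -> (forall j, u j <= 0) -> l <= 0.
Proof. move=> H Hj. have := Rle_cv_lim Hj H (cv_const 0). done. Qed.

Lemma cv_ge0 (u : nat -> R) l : Un_cv u l -> (forall j, 0 <= u j) -> 0 <= l.
Proof. move=> H Hj. have := Rle_cv_lim Hj (cv_const 0) H. done. Qed.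

Lemma cv_eq0 (u : nat -> R) l : Un_cv u l -> (forall j, u j = 0) -> l = 0.
Proof. move=> H Hj. apply: (UL_sequence u) => //. have := cv_const 0. apply: Un_cv_ext => j. by rewrite Hj. Qed.

Arguments cv_eq0 {u l}. Arguments cv_le0 {u l}. Arguments cv_ge0 {u l}.
Arguments cv_cont {n h u l}. Arguments cv_contv {n G u l}. Arguments cv_dot {n a b la lb}.
Lemma Rabs_le_inv a b : Rabs a <= b -> -b <= a <= b.
Proof. split_Rabs; lra. Qed.

Definition incr (phi : nat -> nat) := forall j, (phi j < phi (S j))%coq_nat.

Lemma incr_ge phi : incr phi -> forall j, (j <= phi j)%coq_nat.
Proof. move=> H; elim => [|j IH]; first lia. have := H j; lia. Qed.

Arguments incr_ge {phi}.
Lemma incr_mono phi : incr phi -> forall a b, (a < b)%coq_nat -> (phi a < phi b)%coq_nat.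
Proof.
  move=> H a b Hab. elim: b Hab => [|b IH] Hab; first lia.
  have := H b. have [->|Hb] : (a = b \/ a < b)%coq_nat by lia. lia. have := IH Hb; lia.
Qed.

Lemma incr_comp phi psi : incr phi -> incr psi -> incr (fun j => phi (psi j)).
Proof. move=> H1 H2 j. apply incr_mono => //. Qed.

Lemma cluster (u : nat -> R) B : (forall j, Rabs (u j) <= B) ->
  exists l, forall eps N, 0 < eps -> exists p, (N <= p)%coq_nat /\ Rabs (u p - l) < eps.
Proof.
  move=> H. have [l Hl] := Bolzano_Weierstrass u (fun c => -B <= c <= B) (compact_P3 (-B) B)
    (fun j => Rabs_le_inv _ _ (H j)).
  exists l => eps N He.
  have Hn : neighbourhood (fun y => Rabs (y - l) < eps) l.
    by exists (mkposreal eps He) => y Hy.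
  have [p [Hp Hv]] := Hl (fun y => Rabs (y - l) < eps) N Hn.
  by exists p.
Qed.

Lemma nat_inv_small eps : 0 < eps -> exists N, forall j, (j >= N)%coq_nat -> / (INR j + 1) < eps.
Proof.
  move=> He. have [N HN] := INR_unbounded (/ eps). exists N => j Hj.
  have : INR N <= INR j by apply le_INR.
  move=> h. have h0 := pos_INR N. rewrite -(Rinv_inv eps). apply Rinv_lt_contravar.
  apply Rmult_lt_0_compat. by apply Rinv_0_lt_compat. lra. lra.
Qed.

Lemma extract (u : nat -> R) l :
  (forall eps N, 0 < eps -> exists p, (N <= p)%coq_nat /\ Rabs (u p - l) < eps) ->
  exists phi, incr phi /\ Un_cv (fun j => u (phi j)) l.
Proof.
  move=> H.
  have H' : forall N j : nat, exists p, (N <= p)%coq_nat /\ Rabs (u p - l) < / (INR j + 1).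
    move=> N j. apply H. apply Rinv_0_lt_compat. have := pos_INR j; lra.
  pose pick N j := proj1_sig (constructive_indefinite_description _ (H' N j)).
  have Hpick : forall N j, (N <= pick N j)%coq_nat /\ Rabs (u (pick N j) - l) < / (INR j + 1).
    move=> N j. rewrite /pick. by case: constructive_indefinite_description.
  pose phi := fix phi j := match j with O => pick O O | S j' => pick (S (phi j')) (S j') end.
  exists phi; split.
    move=> j /=. have := proj1 (Hpick (S (phi j)) (S j)). lia.
  move=> eps He. have [N HN] := nat_inv_small eps He. exists N => j Hj.
  rewrite /R_dist. eapply Rlt_trans; last apply (HN j Hj).
  case: j Hj => [|j] Hj /=. exact: (proj2 (Hpick O O)). exact: (proj2 (Hpick _ _)).
Qed.

Lemma BW_fin (I : finType) (u : nat -> I -> R) B : (forall j i, Rabs (u j i) <= B) ->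
  exists phi l, incr phi /\ cvv (fun j => u (phi j)) l.
Proof.
  move=> H.
  have Hs : forall s : seq I, exists phi l, incr phi /\
     forall i, i \in s -> Un_cv (fun j => u (phi j) i) (l i).
    elim => [|a s [phi [l [Hphi Hl]]]].
      exists id, (fun _ => 0); split => // j /=; lia.
    have [la Hla] := @cluster (fun j => u (phi j) a) B (fun j => H _ _).
    have [psi [Hpsi Hcv]] := @extract _ _ Hla.
    exists (fun j => phi (psi j)), (fun i => if i == a then la else l i); split.
      exact: incr_comp.
    move=> i; rewrite in_cons. case: (eqVneq i a) => [-> _| Hia /= Hi]. exact: Hcv.
    apply: (@cv_sub_seq (fun j => u (phi j) i) (l i) psi). exact: Hl. exact: incr_ge.
  have [phi [l [Hphi Hl]]] := Hs (enum I). exists phi, l; split => // i.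
  apply Hl. by rewrite mem_enum.
Qed.

Lemma box_bound n (h : Vec n -> R) : cont h -> forall Bx, exists M,
  forall y : Vec n, (forall i, Rabs (y i) <= Bx) -> Rabs (h y) <= M.
Proof.
  move=> Hh Bx. apply NNPP => Hno.
  have Hy : forall j : nat, exists y : Vec n, (forall i, Rabs (y i) <= Bx) /\ INR j < Rabs (h y).
    move=> j. apply NNPP => Hj. apply Hno. exists (INR j) => y Hy.
    apply Rnot_lt_le => Hlt. apply Hj. by exists y.
  pose y j := proj1_sig (constructive_indefinite_description _ (Hy j)).
  have Hyj : forall j, (forall i, Rabs (y j i) <= Bx) /\ INR j < Rabs (h (y j)).
    move=> j. rewrite /y. by case: constructive_indefinite_description.
  have [phi [l [Hphi Hl]]] := @BW_fin _ y Bx (fun j i => proj1 (Hyj j) i).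
  have Hc := cv_cont Hh Hl.
  have [N HN] := Hc 1 Rlt_0_1.
  have [N' HN'] := INR_unbounded (Rabs (h l) + 1).
  pose j := Nat.max N N'.
  have h1 := HN j (Nat.le_max_l _ _). rewrite /R_dist in h1.
  have h2 := proj2 (Hyj (phi j)).
  have h3 : INR N' <= INR (phi j).
    apply le_INR. have := incr_ge Hphi j. lia.
  have := Rabs_triang_inv (h (y (phi j))) (h l). lra.
Qed.

Lemma grad_cont n (h : Vec n -> R) dh : has_gradient h dh -> cont h.
Proof.
  move=> Hg x eps He.
  have [d1 [Hd1 H1]] := Hg x 1 Rlt_0_1.
  have hk := kk_pos n. have hn := norm_nonneg (dh x).
  pose C := kk n * norm (dh x) + 1.
  have HC : 0 < C by rewrite /C; nra.
  exists (Rmin d1 (eps / C)); split.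
    apply Rmin_pos => //. by apply Rdiv_lt_0_compat.
  move=> y Hy. set u := vsub y x in Hy *.
  have Hu1 : norm u < d1 by have := Rmin_l d1 (eps / C); lra.
  have Hu2 : norm u < eps / C by have := Rmin_r d1 (eps / C); lra.
  have Hvx : vadd x u = y by apply functional_extensionality => i; rewrite /vadd /u /vsub; lra.
  have := H1 u Hu1. rewrite Hvx => H2.
  have H3 := dot_bound (dh x) u. have hu := norm_nonneg u.
  have H4 : C * norm u < eps.
    have -> : eps = C * (eps / C) by field; lra.
    apply Rmult_lt_compat_l => //.
  have : Rabs (h y - h x) <= C * norm u.
    have := Rabs_triang (h y - h x - dot (dh x) u) (dot (dh x) u).
    have -> : h y - h x - dot (dh x) u + dot (dh x) u = h y - h x by ring.
    rewrite /C. nra.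
  lra.
Qed.

Definition line n (x d : Vec n) (s : R) : Vec n := fun i => x i + s * d i.
Arguments line {n}.

Lemma line_deriv n (h : Vec n -> R) dh (x d : Vec n) : has_gradient h dh ->
  forall s, derivable_pt_lim (fun s => h (line x d s)) s (dot (dh (line x d s)) d).
Proof.
  move=> Hg s eps He.
  have hn := norm_nonneg d.
  set p := line x d s.
  have He' : 0 < eps / (2 * (norm d + 1)) by apply Rdiv_lt_0_compat; lra.
  have [del [Hdel H1]] := Hg p _ He'.
  have Hdp : 0 < del / (norm d + 1) by apply Rdiv_lt_0_compat; lra.
  exists (mkposreal _ Hdp) => hh Hh0 Hhh. simpl in Hhh.
  set u : Vec n := fun i => hh * d i.
  have Hnu : norm u = Rabs hh * norm d by apply norm_scal.
  have Hu : norm u < del.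
    rewrite Hnu. have : Rabs hh * (norm d + 1) < del.
      have -> : del = del / (norm d + 1) * (norm d + 1) by field; lra.
      apply Rmult_lt_compat_r; lra.
    have := Rabs_pos hh. nra.
  have := H1 u Hu.
  have -> : vadd p u = line x d (s + hh).
    apply functional_extensionality => i; rewrite /vadd /p /u /line; ring.
  rewrite /u dot_scal_r Hnu => H2.
  have Hah : 0 < Rabs hh by apply Rabs_pos_lt.
  have -> : (h (line x d (s + hh)) - h p) / hh - dot (dh p) d =
            (h (line x d (s + hh)) - h p - hh * dot (dh p) d) / hh by field.
  rewrite /Rdiv Rabs_mult Rabs_inv.
  apply (Rmult_lt_reg_r (Rabs hh)) => //.
  rewrite /Rdiv Rmult_assoc Rinv_l; last lra. rewrite Rmult_1_r.
  eapply Rle_lt_trans; first exact H2.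
  have : eps / (2 * (norm d + 1)) * norm d < eps.
    have : eps / (2 * (norm d + 1)) * norm d <= eps / 2.
      have -> : eps / 2 = eps / (2 * (norm d + 1)) * (norm d + 1) by field; lra.
      nra.
    lra.
  nra.
Qed.

Arguments line_deriv {n h dh}.
Lemma descent n (h : Vec n -> R) dh L : has_gradient h dh -> lipschitz_vec dh L ->
  forall x y, h y <= h x + dot (dh x) (vsub y x) + kk n * Rabs L * dot (vsub y x) (vsub y x).
Proof.
  move=> Hg HL x y. set d := vsub y x.
  pose pr := fun s => exist (fun l => derivable_pt_lim (fun s => h (line x d s)) s l) _
                      (line_deriv x d Hg s).
  have [c [Hc Hc01]] := MVT_cor1 (fun s => h (line x d s)) 0 1 pr Rlt_0_1.
  have E1 : line x d 1 = y by apply functional_extensionality => i; rewrite /line /d /vsub; ring.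
  have E0 : line x d 0 = x by apply functional_extensionality => i; rewrite /line; ring.
  rewrite E1 E0 /= in Hc.
  have E2 : vsub (line x d c) x = (fun i => c * d i).
    apply functional_extensionality => i; rewrite /line /vsub; ring.
  have Hdd : dot (dh (line x d c)) d = dot (dh x) d + dot (vsub (dh (line x d c)) (dh x)) d
    by rewrite dot_sub_l; ring.
  have B1 := dot_bound (vsub (dh (line x d c)) (dh x)) d.
  have B2 := HL (line x d c) x. rewrite E2 norm_scal Rabs_right in B2; last lra.
  have hk := kk_pos n. have hn := norm_nonneg d. have hsq := norm_sq d.
  have hv := norm_nonneg (vsub (dh (line x d c)) (dh x)).
  have B3 : norm (vsub (dh (line x d c)) (dh x)) <= Rabs L * norm d.
    have : L * (c * norm d) <= Rabs L * norm d.
      case: (Rle_lt_dec 0 L) => HL0.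
        rewrite Rabs_right; last lra.
        have : c * norm d <= norm d by nra. nra.
      have h0 : 0 <= c * norm d by apply Rmult_le_pos; lra.
      have : L * (c * norm d) <= 0.
        rewrite -(Rmult_0_r L). apply Rmult_le_compat_neg_l; lra.
      have := Rabs_pos L. nra.
    lra.
  have B4 : kk n * norm (vsub (dh (line x d c)) (dh x)) * norm d <= kk n * Rabs L * dot d d.
    rewrite -hsq. have := Rabs_pos L. 
    have : kk n * norm (vsub (dh (line x d c)) (dh x)) <= kk n * (Rabs L * norm d) by nra.
    nra.
  have := Rle_abs (dot (vsub (dh (line x d c)) (dh x)) d). 
  move: Hc. rewrite Rminus_0_r Rmult_1_r. lra.
Qed.

Arguments grad_cont {n h dh}. Arguments box_bound {n h}. Arguments descent {n h dh L}.
Lemma Gbar_self n m (g : 'I_m -> Vec n -> R) dg z w i : Gbar g dg z z w i = g i z.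
Proof. rewrite /Gbar vsub_xx !dot_zero_r; ring. Qed.

Lemma subobj_self n (df : Vec n -> Vec n) P1 z xi' L : subobj df P1 z xi' L z = P1 z.
Proof. rewrite /subobj vsub_xx !dot_zero_r; ring. Qed.

Arguments Gbar_self {n m}. Arguments subobj_self {n}.
Lemma dot_opp_l n (v d : Vec n) : dot (fun j => - v j) d = - dot v d.
Proof. have -> : - dot v d = -1 * dot v d by ring. rewrite -(dot_scal_l (-1)) /dot; apply eq_bigr => i _; ring. Qed.

Lemma prox_subdiff n (P : Vec n -> R) (x v : Vec n) C : convex_fun P ->
  (forall y, P x <= P y + dot v (vsub y x) + C * dot (vsub y x) (vsub y x)) ->
  subdiff P x (fun j => - v j).
Proof.
  move=> Hc H w. rewrite dot_opp_l.
  set D := dot (vsub w x) (vsub w x). set Q := P w - P x + dot v (vsub w x).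
  have HD : 0 <= D by apply dot_nonneg.
  have key : forall s, 0 < s <= 1 -> 0 <= Q + C * s * D.
    move=> s Hs.
    have Hy := H (fun i => s * w i + (1 - s) * x i).
    have Hcv := Hc w x s (conj (Rlt_le _ _ (proj1 Hs)) (proj2 Hs)).
    have E : vsub (fun i => s * w i + (1 - s) * x i) x = (fun i => s * vsub w x i).
      apply functional_extensionality => i; rewrite /vsub; ring.
    rewrite E dot_scal_r dot_scal_l dot_scal_r -/D in Hy.
    have : 0 <= s * (Q + C * s * D) by rewrite /Q; nra.
    move=> h. apply (Rmult_le_reg_l s); lra.
  apply NNPP => Hneg. have HQ : Q < 0 by rewrite /Q; lra.
  set s := Rmin 1 (- Q / (2 * (Rabs C * D + 1))).
  have Hca := Rabs_pos C.
  have Hden : 0 < 2 * (Rabs C * D + 1) by nra.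
  have Hs0 : 0 < s. apply Rmin_pos; [lra| apply Rdiv_lt_0_compat; lra].
  have Hs1 : s <= 1 by apply Rmin_l.
  have Hs2 : s <= - Q / (2 * (Rabs C * D + 1)) by apply Rmin_r.
  have := key s (conj Hs0 Hs1).
  have h1 : C * s * D <= Rabs C * D * s.
    have := Rle_abs C. have : 0 <= s * D by nra. nra.
  have h2 : Rabs C * D * s <= Rabs C * D * (- Q / (2 * (Rabs C * D + 1))).
    apply Rmult_le_compat_l => //; nra.
  have h3 : Rabs C * D * (- Q / (2 * (Rabs C * D + 1))) < - Q / 2.
    have -> : Rabs C * D * (- Q / (2 * (Rabs C * D + 1))) =
              (- Q / 2) * (Rabs C * D / (Rabs C * D + 1)) by field; nra.
    have : Rabs C * D / (Rabs C * D + 1) < 1.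
      apply (Rmult_lt_reg_r (Rabs C * D + 1)); first nra.
      rewrite /Rdiv Rmult_assoc Rinv_l; nra.
    have : 0 < - Q / 2 by lra. 
    set q := Rabs C * D / _. nra.
  lra.
Qed.

Arguments prox_subdiff {n P x v C}.
Lemma fin_max (u : nat -> R) N : exists M, forall t, (t < N)%coq_nat -> u t <= M.
Proof.
  elim: N => [|N [M HM]]. by exists 0 => t Ht; lia.
  exists (Rmax M (u N)) => t Ht.
  have [->|Hlt] : (t = N \/ t < N)%coq_nat by lia. apply Rmax_r.
  eapply Rle_trans; [apply HM => //| apply Rmax_l].
Qed.

Section Main.
Variables (n m : nat)
  (f : Vec n -> R) (df : Vec n -> Vec n) (P1 P2 : Vec n -> R)
  (g : 'I_m -> Vec n -> R) (dg : 'I_m -> Vec n -> Vec n)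
  (Hf : has_gradient f df) (Hdf_cont : cont_vec df)
  (HP1c : convex_fun P1) (HP1cont : cont P1)
  (HP2c : convex_fun P2) (HP2cont : cont P2)
  (Hgcont : forall i, cont (g i))
  (Lf_ : R) (HLf : lipschitz_vec df Lf_)
  (Hg : forall i, has_gradient (g i) (dg i))
  (Lg_ : 'I_m -> R) (HLg : forall i, lipschitz_vec (dg i) (Lg_ i))
  (Hlev : level_bounded f P1 P2 g)
  (Hdg_cont : forall i, cont_vec (dg i))
  (Hmfcq : MFCQ g dg)
  (c Lmin Lmax tau : R) (Hc : 0 < c) (HL : 0 < Lmin < Lmax) (Htau : 1 < tau)
  (x xi : nat -> Vec n) (K : nat -> nat)
  (Lft : nat -> nat -> R) (Lgt : nat -> nat -> 'I_m -> R) (xtr : nat -> nat -> Vec n)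
  (Hrun : SCPls_run f df P1 P2 g dg c Lmin Lmax tau x xi K Lft Lgt xtr)
  (lam : nat -> 'I_m -> R)
  (Hlam : forall t, sub_multiplier df P1 g dg (x t) (xi t)
                      (Lft t (K t)) (Lgt t (K t)) (x t.+1) (lam t)).

Local Notation F := (Fval f P1 P2).
Local Notation D a b := (dot (vsub a b) (vsub a b)).

Lemma run_feas t : feasible g (x t).
Proof.
  case: t => [|t]. exact: (proj1 Hrun).
  have [_ [_ [_ [_ [_ [[Hfe _] ->]]]]]] := (proj2 Hrun) t. exact Hfe.
Qed.

Lemma run_dec t : F (x t.+1) <= F (x t) - c / 2 * D (x t.+1) (x t).
Proof. have [_ [_ [_ [_ [_ [[_ Hd] ->]]]]]] := (proj2 Hrun) t. exact Hd. Qed.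

Lemma D_nonneg (a b : Vec n) : 0 <= D a b. Proof. apply dot_nonneg. Qed.

Lemma F_le0 t : F (x t) <= F (x 0).
Proof.
  elim: t => [|t IH]; first lra. have := run_dec t. have := D_nonneg (x t.+1) (x t).
  move=> h1 h2. have : 0 <= c / 2 * D (x t.+1) (x t) by apply Rmult_le_pos; lra. lra.
Qed.

Lemma x_bound : exists B0, 0 <= B0 /\ forall t i, Rabs (x t i) <= B0.
Proof.
  have [B HB] := Hlev (F (x 0)). exists (Rabs B); split; first apply Rabs_pos.
  move=> t i. have := HB (x t) (run_feas t) (F_le0 t).
  have := coord_le_norm (x t) i. have := Rle_abs B. lra.
Qed.

Lemma F_lower : exists Ml, forall t, Ml <= F (x t).
Proof.
  have [B0 [_ HB0]] := x_bound.
  have [M1 H1] := box_bound (grad_cont Hf) B0.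
  have [M2 H2] := box_bound HP1cont B0.
  have [M3 H3] := box_bound HP2cont B0.
  exists (- M1 - M2 - M3) => t. rewrite /Fval.
  have := H1 _ (HB0 t). have := H2 _ (HB0 t). have := H3 _ (HB0 t).
  move=> h3 h2 h1. have := Rabs_le_inv _ _ h1. have := Rabs_le_inv _ _ h2.
  have := Rabs_le_inv _ _ h3. lra.
Qed.

Lemma step_cv i : Un_cv (fun t => x t.+1 i - x t i) 0.
Proof.
  have [Ml HMl] := F_lower.
  have Hdec : Un_decreasing (fun t => F (x t)).
    move=> t. have := run_dec t. have := D_nonneg (x t.+1) (x t).
    move=> h1 h2. have : 0 <= c / 2 * D (x t.+1) (x t) by apply Rmult_le_pos; lra. lra.
  have Hlb : has_lb (fun t => F (x t)).
    exists (- Ml) => r [t ->]. rewrite /opp_seq. have := HMl t. lra.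
  have [lF HlF] := decreasing_cv _ Hdec Hlb.
  have HlF1 : Un_cv (fun t => F (x t.+1)) lF.
    apply: (@cv_sub_seq (fun t => F (x t)) lF S) => //. move=> j; lia.
  have Hdiff := CV_minus _ _ _ _ HlF HlF1. rewrite Rminus_diag in Hdiff.
  move=> eps He.
  have He2 : 0 < c / 2 * (eps * eps) by apply Rmult_lt_0_compat; nra.
  have [N HN] := Hdiff _ He2. exists N => t Ht.
  have := HN t Ht. rewrite /R_dist Rminus_0_r Rabs_right; last first.
    have := Hdec t. lra.
  move=> h1. have h2 := run_dec t.
  have h3 := coord_sq (vsub (x t.+1) (x t)) i. rewrite /vsub in h3.
  have h4 : D (x t.+1) (x t) < eps * eps.
    apply (Rmult_lt_reg_l (c / 2)); first lra. lra.
  rewrite /R_dist Rminus_0_r.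
  rewrite -(Rabs_right eps); last lra.
  apply Rsqr_lt_abs_0. rewrite /Rsqr.
  rewrite /vsub in h4. lra.
Qed.

Lemma accept_lemma t k : (k <= K t)%N -> feasible g (xtr t k) ->
  2 * kk n * Rabs Lf_ + c <= Lft t k ->
  F (xtr t k) <= F (x t) - c / 2 * D (xtr t k) (x t).
Proof.
  move=> Hk Hfe HLk.
  have [Hsub [_ [_ [Hsolve _]]]] := (proj2 Hrun) t.
  have [Hgb Hopt] := Hsolve k Hk.
  set z := xtr t k in Hfe Hgb Hopt *.
  have Hxt : forall i, Gbar g dg (x t) (x t) (Lgt t k) i <= 0.
    move=> i. rewrite Gbar_self. exact: run_feas.
  have := Hopt _ Hxt. rewrite subobj_self /subobj => Ho.
  have Hd := descent Hf HLf (x t) z.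
  have Hp2 := Hsub z.
  rewrite dot_sub_l in Ho.
  have HD := D_nonneg z (x t).
  have hk := kk_pos n. have ha := Rabs_pos Lf_.
  rewrite /Fval.
  have : (Lft t k / 2 - kk n * Rabs Lf_) * D z (x t) >= c / 2 * D z (x t).
    apply Rle_ge. apply Rmult_le_compat_r => //. lra.
  lra.
Qed.

Lemma g_lemma t k i : (k <= K t)%N -> 2 * kk n * Rabs (Lg_ i) <= Lgt t k i ->
  g i (xtr t k) <= 0.
Proof.
  move=> Hk HLk.
  have [_ [_ [_ [Hsolve _]]]] := (proj2 Hrun) t.
  have [Hgb _] := Hsolve k Hk.
  have := Hgb i. rewrite /Gbar => Hg1.
  have Hd := descent (Hg i) (HLg i) (x t) (xtr t k).
  have HD := D_nonneg (xtr t k) (x t).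
  have hk := kk_pos n. have ha := Rabs_pos (Lg_ i).
  have : kk n * Rabs (Lg_ i) * D (xtr t k) (x t) <= Lgt t k i / 2 * D (xtr t k) (x t).
    apply Rmult_le_compat_r => //. lra.
  lra.
Qed.

Definition Thf := 2 * kk n * Rabs Lf_ + c.
Definition Thg := 2 * kk n * \big[Rplus/0]_(i < m) Rabs (Lg_ i).
Definition Sf := tau * (1 + Thf / Lmin).
Definition Sg := tau * (1 + Thg / Lmin).

Lemma Thg_ge i : 2 * kk n * Rabs (Lg_ i) <= Thg.
Proof.
  rewrite /Thg. have hk := kk_pos n.
  have := bs_pos_D1 (fun j => Rabs (Lg_ j)) i (fun j => Rabs_pos _). 
  move=> h. apply Rmult_le_compat_l => //. lra.
Qed.

Lemma Th_pos : 0 <= Thf /\ 0 <= Thg.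
Proof.
  have hk := kk_pos n. have := Rabs_pos Lf_.
  split. rewrite /Thf; nra.
  rewrite /Thg. apply Rmult_le_pos; first lra.
  have := bs_le (fun _ : 'I_m => 0) (fun j => Rabs (Lg_ j)) (fun j => Rabs_pos _).
  by rewrite bs_zero.
Qed.

Lemma Sf_ge1 : 1 <= Sf.
Proof. have [h1 _] := Th_pos. rewrite /Sf. have : 0 <= Thf / Lmin by apply Rmult_le_pos; [lra| apply Rlt_le, Rinv_0_lt_compat; lra]. nra. Qed.
Lemma Sg_ge1 : 1 <= Sg.
Proof. have [_ h1] := Th_pos. rewrite /Sg. have : 0 <= Thg / Lmin by apply Rmult_le_pos; [lra| apply Rlt_le, Rinv_0_lt_compat; lra]. nra. Qed.

Lemma ls_inv t k : (k <= K t)%N -> exists sf sg, 1 <= sf <= Sf /\ 1 <= sg <= Sg /\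
  Lft t k = sf * Lft t 0 /\ forall i, Lgt t k i = sg * Lgt t 0 i.
Proof.
  have [_ [[Hf0 _] [Hg0 [Hsolve [Hstep _]]]]] := (proj2 Hrun) t.
  elim: k => [|k IH] Hk.
    exists 1, 1; split; first (have := Sf_ge1; lra). split; first (have := Sg_ge1; lra).
    split; first ring. move=> i; ring.
  have Hk' : (k < K t)%N by [].
  have [sf [sg [Hsf [Hsg [Ef Eg]]]]] := IH (ltnW Hk').
  have [Hna [Hinf Hfe]] := Hstep k Hk'.
  case: (classic (feasible g (xtr t k))) => Hfk.
  - have [E1 E2] := Hfe Hfk. exists (tau * sf), sg; split; last split => //.
    have Hlt : Lft t k < Thf.
      apply Rnot_le_lt => Hle. apply Hna. split => //. exact: (accept_lemma t k (ltnW Hk') Hfk Hle).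
    rewrite Ef in Hlt. have : sf * Lmin <= sf * Lft t 0 by apply Rmult_le_compat_l; lra.
    move=> h. have : sf < Thf / Lmin.
      apply (Rmult_lt_reg_r Lmin); first lra. rewrite /Rdiv Rmult_assoc Rinv_l; lra.
    move=> h2. rewrite /Sf. split; nra.
    split => //. rewrite E1 Ef; ring. move=> i; rewrite E2 Eg //.
  - have [E1 E2] := Hinf Hfk. exists sf, (tau * sg); split => //; split; last split.
    have [i Hi] : exists i, 0 < g i (xtr t k).
      apply NNPP => Hn. apply Hfk => i. apply Rnot_lt_le => Hl. apply Hn. by exists i.
    have Hlt : Lgt t k i < Thg.
      apply Rnot_le_lt => Hle. have := g_lemma t k i (ltnW Hk') (Rle_trans _ _ _ (Thg_ge i) Hle). lra.
    rewrite Eg in Hlt. have := Hg0 i. case=> Hg0i _.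
    have : sg * Lmin <= sg * Lgt t 0 i by apply Rmult_le_compat_l; lra.
    move=> h. have : sg < Thg / Lmin.
      apply (Rmult_lt_reg_r Lmin); first lra. rewrite /Rdiv Rmult_assoc Rinv_l; lra.
    move=> h2. rewrite /Sg. split; nra.
    rewrite E2 //. move=> i; rewrite E1 Eg; ring.
Qed.

Lemma L_bounds : exists Mf Mg, forall t, Lmin <= Lft t (K t) <= Mf /\
  forall i, Lmin <= Lgt t (K t) i <= Mg.
Proof.
  exists (Sf * Lmax), (Sg * Lmax) => t.
  have [_ [[Hf0 Hf1] [Hg0 _]]] := (proj2 Hrun) t.
  have [sf [sg [Hsf [Hsg [Ef Eg]]]]] := ls_inv t (K t) (leqnn (K t)).
  rewrite Ef; split. split; nra.
  move=> i; rewrite Eg. have := Hg0 i. case=> h1 h2. split; nra.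
Qed.

Lemma xi_bound : exists Bx, forall t i, Rabs (xi t i) <= Bx.
Proof.
  have [B0 [HB0p HB0]] := x_bound.
  have [M HM] := box_bound HP2cont (B0 + 1).
  exists (2 * M) => t i.
  have [Hsub _] := (proj2 Hrun) t.
  have Hev : forall j, Rabs (ev i j) <= 1.
    move=> j; rewrite /ev; case: (j == i); rewrite ?Rabs_R1 ?Rabs_R0; lra.
  have Hy1 : forall j, Rabs (vadd (x t) (ev i) j) <= B0 + 1.
    move=> j. rewrite /vadd. have := Rabs_triang (x t j) (ev i j). have := HB0 t j. have := Hev j. lra.
  have Hy2 : forall j, Rabs (vsub (x t) (ev i) j) <= B0 + 1.
    move=> j. rewrite /vsub /Rminus. have := Rabs_triang (x t j) (- ev i j). rewrite Rabs_Ropp.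
    have := HB0 t j. have := Hev j. lra.
  have E1 : vsub (vadd (x t) (ev i)) (x t) = ev i.
    apply functional_extensionality => j; rewrite /vsub /vadd; ring.
  have E2 : vsub (vsub (x t) (ev i)) (x t) = (fun j => - ev i j).
    apply functional_extensionality => j; rewrite /vsub; ring.
  have S1 := Hsub (vadd (x t) (ev i)). rewrite E1 dot_ev in S1.
  have S2 := Hsub (vsub (x t) (ev i)). rewrite E2 dot_comm dot_opp_l dot_comm dot_ev in S2.
  have B1 := Rabs_le_inv _ _ (HM _ Hy1). have B2 := Rabs_le_inv _ _ (HM _ Hy2).
  have Hxt : forall j, Rabs (x t j) <= B0 + 1 by move=> j; have := HB0 t j; lra.
  have B3 := Rabs_le_inv _ _ (HM _ Hxt).
  apply Rabs_le. lra.
Qed.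

Lemma cvv_vsub' (a b : nat -> Vec n) la lb : cvv a la -> cvv b lb ->
  cvv (fun j => vsub (a j) (b j)) (vsub la lb).
Proof. move=> Ha Hb i. exact: CV_minus. Qed.

Lemma subobj_cv (cs xis zs : nat -> Vec n) (lfs : nat -> R) cl xil zl al :
  cvv cs cl -> cvv xis xil -> cvv zs zl -> Un_cv lfs al ->
  Un_cv (fun j => subobj df P1 (cs j) (xis j) (lfs j) (zs j)) (subobj df P1 cl xil al zl).
Proof.
  move=> Hcc Hx Hz Hl. rewrite /subobj.
  apply: CV_plus; last exact: (cv_cont HP1cont Hz).
  apply: CV_plus.
    apply: cv_dot; apply: cvv_vsub' => //. exact: (cv_contv Hdf_cont Hcc).
  apply: CV_mult; last by apply: cv_dot; apply: cvv_vsub'.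
  exact: (CV_mult _ _ _ _ Hl (cv_const (/ 2))).
Qed.

Lemma Gbar_cv i (zs cs : nat -> Vec n) (ws : nat -> 'I_m -> R) zl cl wl :
  cvv zs zl -> cvv cs cl -> cvv ws wl ->
  Un_cv (fun j => Gbar g dg (zs j) (cs j) (ws j) i) (Gbar g dg zl cl wl i).
Proof.
  move=> Hz Hcc Hw. rewrite /Gbar.
  apply: CV_plus. apply: CV_plus. exact: (cv_cont (Hgcont i) Hcc).
    apply: cv_dot; last by apply: cvv_vsub'. exact: (cv_contv (Hdg_cont i) Hcc).
  apply: CV_mult; last by apply: cv_dot; apply: cvv_vsub'.
  exact: (CV_mult _ _ _ _ (Hw i) (cv_const (/ 2))).
Qed.

Lemma lagsum_cv (mus : nat -> 'I_m -> R) mul (zs cs : nat -> Vec n) (ws : nat -> 'I_m -> R) zl cl wl :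
  cvv mus mul -> cvv zs zl -> cvv cs cl -> cvv ws wl ->
  Un_cv (fun j => \big[Rplus/0]_(i < m) (mus j i * Gbar g dg (zs j) (cs j) (ws j) i))
        (\big[Rplus/0]_(i < m) (mul i * Gbar g dg zl cl wl i)).
Proof.
  move=> Hm Hz Hcc Hw. apply: (cv_bsum_seq _ _ (fun j i => mus j i * Gbar g dg (zs j) (cs j) (ws j) i) (fun i => mul i * Gbar g dg zl cl wl i)) => i.
  apply: CV_mult => //. exact: Gbar_cv.
Qed.

Lemma x_next_cv (T : nat -> nat) xs : (forall j, (j <= T j)%coq_nat) ->
  cvv (fun j => x (T j)) xs -> cvv (fun j => x (T j).+1) xs.
Proof.
  move=> HT Hx i.
  have := CV_plus _ _ _ _ (Hx i) (cv_sub_seq (step_cv i) HT).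
  rewrite Rplus_0_r. apply: Un_cv_ext => j. ring.
Qed.


Arguments subobj_cv {cs xis zs lfs cl xil zl al}. Arguments Gbar_cv i {zs cs ws zl cl wl}.
Arguments lagsum_cv {mus mul zs cs ws zl cl wl}. Arguments x_next_cv {T xs}. Arguments cvv_vsub' {a b la lb}.

Lemma dot_lincomb (mu : 'I_m -> R) (G : 'I_m -> Vec n) (A d : Vec n) :
  dot (fun j => A j + \big[Rplus/0]_(i < m) (mu i * G i j)) d =
  dot A d + \big[Rplus/0]_(i < m) (mu i * dot (G i) d).
Proof.
  rewrite /dot.
  have -> : \big[Rplus/0]_(j < n) ((A j + \big[Rplus/0]_(i < m) (mu i * G i j)) * d j) =
            \big[Rplus/0]_(j < n) (A j * d j) + \big[Rplus/0]_(j < n) \big[Rplus/0]_(i < m) (mu i * G i j * d j).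
    rewrite -bs_add. apply eq_bigr => j _. rewrite Rmult_plus_distr_r. congr (_ + _).
    rewrite Rmult_comm -bs_scal. apply eq_bigr => i _. ring.
  congr (_ + _). rewrite exchange_big. apply eq_bigr => i _. rewrite -bs_scal.
  apply eq_bigr => j _. ring.
Qed.

Lemma stat_part (Bl : R) : (forall t i, Rabs (lam t i) <= Bl) ->
  forall xs, accumulation_point x xs -> stationary f df P1 P2 g dg xs.
Proof.
  move=> HBl xs Hacc.
  have Hex : forall k, exists t, (k <= t)%coq_nat /\ norm (vsub (x t) xs) < / (INR k + 1).
    move=> k. have Hp : 0 < / (INR k + 1) by apply Rinv_0_lt_compat; have := pos_INR k; lra.
    have [t [Ht1 Ht2]] := Hacc _ k Hp. exists t; split => //. exact/leP.
  pose ts k := proj1_sig (constructive_indefinite_description _ (Hex k)).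
  have Htt : forall k, (k <= ts k)%coq_nat /\ norm (vsub (x (ts k)) xs) < / (INR k + 1).
    move=> k. rewrite /ts. by case: constructive_indefinite_description.
  have Htx : cvv (fun k => x (ts k)) xs.
    move=> i eps He. have [N HN] := nat_inv_small eps He. exists N => k Hk.
    rewrite /R_dist. have h : Rabs (x (ts k) i - xs i) <= norm (vsub (x (ts k)) xs) := coord_le_norm (vsub (x (ts k)) xs) i.
    have := proj2 (Htt k). have := HN k Hk. lra.
  have [Bx HBx] := xi_bound.
  have [Mf [Mg HMfg]] := L_bounds.
  pose w k (a : ('I_n + 'I_m) + ('I_m + unit)) := match a with
    | inl (inl i) => xi (ts k) i | inl (inr i) => lam (ts k) i
    | inr (inl i) => Lgt (ts k) (K (ts k)) i | inr (inr _) => Lft (ts k) (K (ts k)) end.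
  have Hwb : forall k a, Rabs (w k a) <= Rabs Bx + Rabs Bl + Rabs Mg + Rabs Mf.
    move=> k a. have := Rabs_pos Bx. have := Rabs_pos Bl. have := Rabs_pos Mg. have := Rabs_pos Mf.
    have := Rle_abs Bx. have := Rle_abs Bl. have := Rle_abs Mg. have := Rle_abs Mf.
    case: a => [[i|i]|[i|u]] /= h1 h2 h3 h4 h5 h6 h7 h8.
    - have := HBx (ts k) i. lra.
    - have := HBl (ts k) i. lra.
    - have [_ H] := HMfg (ts k). have := H i. move=> [h9 h10].
      rewrite Rabs_right; lra.
    - have [[h9 h10] _] := HMfg (ts k). rewrite Rabs_right; lra.
  have [phi [l [Hphi Hl]]] := @BW_fin _ w _ Hwb.
  pose T j := ts (phi j).
  have HT : forall j, (j <= T j)%coq_nat.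
    move=> j. have := incr_ge Hphi j. have := proj1 (Htt (phi j)). rewrite /T. lia.
  pose xil := fun i => l (inl (inl i)). pose laml := fun i => l (inl (inr i)).
  pose b := fun i => l (inr (inl i)). pose a := l (inr (inr tt)).
  have Hx : cvv (fun j => x (T j)) xs.
    move=> i. exact: (cv_sub_seq (Htx i) (incr_ge Hphi)).
  have Hx1 := x_next_cv HT Hx.
  have Hxi : cvv (fun j => xi (T j)) xil by move=> i; exact: (Hl (inl (inl i))).
  have Hlm : cvv (fun j => lam (T j)) laml by move=> i; exact: (Hl (inl (inr i))).
  have Hlg : cvv (fun j => Lgt (T j) (K (T j))) b by move=> i; exact: (Hl (inr (inl i))).
  have Hlf : Un_cv (fun j => Lft (T j) (K (T j))) a by exact: (Hl (inr (inr tt))).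
  have Hcs : forall i, laml i * g i xs = 0.
    move=> i. rewrite -(Gbar_self g dg xs b i).
    apply: (cv_eq0 (CV_mult _ _ _ _ (Hlm i) (Gbar_cv i Hx1 Hx Hlg))).
    move=> j. have [_ [_ H]] := Hlam (T j). exact: H.
  have Hfeas : feasible g xs.
    move=> i. apply: (cv_le0 (cv_cont (Hgcont i) Hx)) => j. exact: run_feas.
  have Hpos : forall i, 0 <= laml i.
    move=> i. apply: (cv_ge0 (Hlm i)) => j. have [H _] := Hlam (T j). exact: H.
  have Hlim : forall y, subobj df P1 xs xil a xs + \big[Rplus/0]_(i < m) (laml i * Gbar g dg xs xs b i)
      <= subobj df P1 xs xil a y + \big[Rplus/0]_(i < m) (laml i * Gbar g dg y xs b i).
    move=> y.
    apply: (Rle_cv_lim _ (CV_plus _ _ _ _ (subobj_cv Hx Hxi Hx1 Hlf) (lagsum_cv Hlm Hx1 Hx Hlg))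
                         (CV_plus _ _ _ _ (subobj_cv Hx Hxi (fun i => cv_const (y i)) Hlf)
                                         (lagsum_cv Hlm (fun i => cv_const (y i)) Hx Hlg))).
    move=> j. have [_ [H _]] := Hlam (T j). exact: H.
  pose v := fun j => vsub (df xs) xil j + \big[Rplus/0]_(i < m) (laml i * dg i xs j).
  pose C := a / 2 + \big[Rplus/0]_(i < m) (laml i * (b i / 2)).
  have Hprox : forall y, P1 xs <= P1 y + dot v (vsub y xs) + C * dot (vsub y xs) (vsub y xs).
    move=> y. have := Hlim y. rewrite subobj_self.
    have -> : \big[Rplus/0]_(i < m) (laml i * Gbar g dg xs xs b i) = 0.
      apply bs_zero => i. rewrite Gbar_self. exact: Hcs.
    have -> : \big[Rplus/0]_(i < m) (laml i * Gbar g dg y xs b i) =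
      \big[Rplus/0]_(i < m) (laml i * g i xs) + \big[Rplus/0]_(i < m) (laml i * dot (dg i xs) (vsub y xs))
      + \big[Rplus/0]_(i < m) (laml i * (b i / 2)) * dot (vsub y xs) (vsub y xs).
      rewrite Rmult_comm -bs_scal -!bs_add. apply eq_bigr => i _. rewrite /Gbar. ring.
    rewrite (bs_zero (fun i => laml i * g i xs)) // /v (dot_lincomb laml (fun i => dg i xs)) /subobj /C /=. lra.
  exists laml; split => //; split => //; split => //.
  exists (fun j => - v j), xil; split; first exact: prox_subdiff Hprox.
  split.
    move=> y. apply: (Rle_cv_lim _ (CV_plus _ _ _ _ (cv_cont HP2cont Hx)
                          (cv_dot Hxi (cvv_vsub' (fun i => cv_const (y i)) Hx)))
                          (cv_const (P2 y))).
    move=> j. have [H _] := (proj2 Hrun) (T j). exact: H.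
  move=> j. rewrite /v /vsub. ring.
Qed.

Lemma lam_bounded : exists B, forall t, norm (lam t) <= B.
Proof.
  apply NNPP => Hno.
  have Hbig : forall B N, exists t, (N <= t)%coq_nat /\ B < norm (lam t).
    move=> B N. apply NNPP => Hn. apply Hno.
    have [M HM] := fin_max (fun t => norm (lam t)) N.
    exists (Rmax B M) => t.
    case: (Nat.lt_ge_cases t N) => Ht.
      eapply Rle_trans; [exact: HM| apply Rmax_r].
    eapply Rle_trans; last apply Rmax_l. apply Rnot_lt_le => Hl. apply Hn. by exists t.
  have Hex : forall k, exists t, (k <= t)%coq_nat /\ INR k + 1 < norm (lam t).
    move=> k. exact: Hbig.
  pose ts k := proj1_sig (constructive_indefinite_description _ (Hex k)).
  have Hts : forall k, (k <= ts k)%coq_nat /\ INR k + 1 < norm (lam (ts k)).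
    move=> k. rewrite /ts. by case: constructive_indefinite_description.
  pose r k := / norm (lam (ts k)).
  have HNpos : forall k, 0 < norm (lam (ts k)).
    move=> k. have := proj2 (Hts k). have := pos_INR k. lra.
  have Hr : forall k, 0 < r k by move=> k; apply Rinv_0_lt_compat.
  have HrN : forall k, r k * norm (lam (ts k)) = 1.
    move=> k. rewrite /r Rinv_l //. have := HNpos k; lra.
  pose Lam k i := r k * lam (ts k) i.
  have HLam : forall k i, Rabs (Lam k i) <= 1.
    move=> k i. rewrite /Lam Rabs_mult Rabs_right; last (have := Hr k; lra).
    rewrite -(HrN k). apply Rmult_le_compat_l; [have := Hr k; lra| apply coord_le_norm].
  have [B0 [_ HB0]] := x_bound.
  have [Bx HBx] := xi_bound.
  have [Mf [Mg HMfg]] := L_bounds.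
  pose w k (a : ('I_n + 'I_n) + ('I_m + ('I_m + unit))) := match a with
    | inl (inl i) => x (ts k) i | inl (inr i) => xi (ts k) i
    | inr (inl i) => Lam k i
    | inr (inr (inl i)) => Lgt (ts k) (K (ts k)) i | inr (inr (inr _)) => Lft (ts k) (K (ts k)) end.
  have Hwb : forall k a, Rabs (w k a) <= Rabs B0 + Rabs Bx + 1 + Rabs Mg + Rabs Mf.
    move=> k a. have := Rabs_pos B0. have := Rabs_pos Bx. have := Rabs_pos Mg. have := Rabs_pos Mf.
    have := Rle_abs B0. have := Rle_abs Bx. have := Rle_abs Mg. have := Rle_abs Mf.
    case: a => [[i|i]|[i|[i|u]]] /= h1 h2 h3 h4 h5 h6 h7 h8.
    - have := HB0 (ts k) i. lra.
    - have := HBx (ts k) i. lra.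
    - have := HLam k i. lra.
    - have [_ H] := HMfg (ts k). have := H i. move=> [h9 h10].
      rewrite Rabs_right; lra.
    - have [[h9 h10] _] := HMfg (ts k). rewrite Rabs_right; lra.
  have [phi [l [Hphi Hl]]] := @BW_fin _ w _ Hwb.
  pose T j := ts (phi j).
  have HT : forall j, (j <= T j)%coq_nat.
    move=> j. have := incr_ge Hphi j. have := proj1 (Hts (phi j)). rewrite /T. lia.
  pose xst := fun i => l (inl (inl i)). pose xil := fun i => l (inl (inr i)).
  pose lb := fun i => l (inr (inl i)).
  pose b := fun i => l (inr (inr (inl i))). pose a := l (inr (inr (inr tt))).
  have Hx : cvv (fun j => x (T j)) xst by move=> i; exact: (Hl (inl (inl i))).
  have Hx1 := x_next_cv HT Hx.
  have Hxi : cvv (fun j => xi (T j)) xil by move=> i; exact: (Hl (inl (inr i))).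
  have HLm : cvv (fun j => Lam (phi j)) lb by move=> i; exact: (Hl (inr (inl i))).
  have Hlg : cvv (fun j => Lgt (T j) (K (T j))) b by move=> i; exact: (Hl (inr (inr (inl i)))).
  have Hlf : Un_cv (fun j => Lft (T j) (K (T j))) a by exact: (Hl (inr (inr (inr tt)))).
  have Hr0 : Un_cv (fun j => r (phi j)) 0.
    move=> eps He. have [N HN] := nat_inv_small eps He. exists N => j Hj.
    rewrite /R_dist Rminus_0_r Rabs_right; last (have := Hr (phi j); lra).
    have h1 := proj2 (Hts (phi j)).
    have h2 : INR j <= INR (phi j) by apply le_INR; exact: incr_ge.
    have h3 := HN j Hj. have h4 := pos_INR j.
    have : r (phi j) <= / (INR j + 1).
      rewrite /r. apply Rinv_le_contravar; lra.
    lra.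
  have Hcs : forall i, lb i * g i xst = 0.
    move=> i. rewrite -(Gbar_self g dg xst b i).
    apply: (cv_eq0 (CV_mult _ _ _ _ (HLm i) (Gbar_cv i Hx1 Hx Hlg))).
    move=> j. have [_ [_ H]] := Hlam (T j). rewrite /Lam Rmult_assoc H. ring.
  have Hpos : forall i, 0 <= lb i.
    move=> i. apply: (cv_ge0 (HLm i)) => j. have [H _] := Hlam (T j).
    rewrite /Lam. apply Rmult_le_pos; [have := Hr (phi j); lra| exact: H].
  have Hfeas : feasible g xst.
    move=> i. apply: (cv_le0 (cv_cont (Hgcont i) Hx)) => j. exact: run_feas.
  have Hdot1 : dot lb lb = 1.
    apply: (UL_sequence _ _ _ (cv_dot HLm HLm)).
    have := cv_const 1. apply: Un_cv_ext => j.
    rewrite /Lam dot_scal_l dot_scal_r -norm_sq.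
    transitivity ((r (phi j) * norm (lam (ts (phi j)))) * (r (phi j) * norm (lam (ts (phi j))))).
      by rewrite HrN; ring.
    ring.
  have [i0 Hi0] : exists i0, lb i0 <> 0.
    apply NNPP => Hn. have : dot lb lb = 0.
      apply bs_zero => i. have : lb i = 0 by apply NNPP => Hi; apply Hn; exists i.
      move=> ->; ring.
    lra.
  have Hlim : forall y, \big[Rplus/0]_(i < m) (lb i * g i xst)
      <= \big[Rplus/0]_(i < m) (lb i * Gbar g dg y xst b i).
    move=> y.
    have := Rle_cv_lim _ (CV_plus _ _ _ _ (CV_mult _ _ _ _ Hr0 (subobj_cv Hx Hxi Hx1 Hlf)) (lagsum_cv HLm Hx1 Hx Hlg))
                         (CV_plus _ _ _ _ (CV_mult _ _ _ _ Hr0 (subobj_cv Hx Hxi (fun i => cv_const (y i)) Hlf))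
                                         (lagsum_cv HLm (fun i => cv_const (y i)) Hx Hlg)).
    have -> : \big[Rplus/0]_(i < m) (lb i * g i xst) =
              \big[Rplus/0]_(i < m) (lb i * Gbar g dg xst xst b i).
      apply eq_bigr => i _. by rewrite Gbar_self.
    rewrite !Rmult_0_l !Rplus_0_l. apply.
    move=> j. have [_ [H _]] := Hlam (T j). have := H y.
    have Hrj := Hr (phi j).
    move=> H'. have := Rmult_le_compat_l _ _ _ (Rlt_le _ _ Hrj) H'.
    rewrite !Rmult_plus_distr_l -!bs_scal.
    have E : forall z, \big[Rplus/0]_(i < m) (r (phi j) * (lam (T j) i * Gbar g dg z (x (T j)) (Lgt (T j) (K (T j))) i)) =
                       \big[Rplus/0]_(i < m) (Lam (phi j) i * Gbar g dg z (x (T j)) (Lgt (T j) (K (T j))) i).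
      move=> z. apply eq_bigr => i _. rewrite /Lam /T. ring.
    rewrite !E. done.
  have [d Hd] := Hmfcq xst Hfeas.
  pose A := \big[Rplus/0]_(i < m) (lb i * dot (dg i xst) d).
  have HA : A < 0.
    have Hterm : forall i, lb i * dot (dg i xst) d <= 0.
      move=> i. case: (Req_dec (g i xst) 0) => Hgi.
        have := Hd i Hgi. have := Hpos i. nra.
      have : lb i = 0.
        case: (Rmult_integral _ _ (Hcs i)) => //.
      move=> ->; lra.
    have Ht0 : lb i0 * dot (dg i0 xst) d < 0.
      have Hg0 : g i0 xst = 0 by case: (Rmult_integral _ _ (Hcs i0)).
      have := Hd i0 Hg0. have := Hpos i0. move=> h1 h2.
      have : 0 < lb i0 by lra. nra.
    rewrite /A (bigD1 i0) //=.
    apply: (Rle_lt_trans _ (lb i0 * dot (dg i0 xst) d + 0)); last lra.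
    apply Rplus_le_compat_l.
    elim/big_ind: _ => [|u v hu hv|i _]; [lra|lra|exact: Hterm].
  pose Dd := dot d d. pose Cb := \big[Rplus/0]_(i < m) (lb i * (b i / 2)).
  have Hs : forall s, 0 <= s * A + s * s * (Cb * Dd).
    move=> s. have := Hlim (line xst d s).
    have E : vsub (line xst d s) xst = (fun i => s * d i).
      apply functional_extensionality => i; rewrite /line /vsub; ring.
    have -> : \big[Rplus/0]_(i < m) (lb i * Gbar g dg (line xst d s) xst b i) =
      \big[Rplus/0]_(i < m) (lb i * g i xst) + s * A + s * s * (Cb * Dd).
      have E1 : \big[Rplus/0]_(i < m) (lb i * Gbar g dg (line xst d s) xst b i) =
        \big[Rplus/0]_(i < m) (lb i * g i xst + s * (lb i * dot (dg i xst) d) + (s * s * Dd) * (lb i * (b i / 2))).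
        apply eq_bigr => i _. rewrite /Gbar E dot_scal_r dot_scal_l dot_scal_r /Dd. ring.
      rewrite E1 !bs_add !bs_scal -/A -/Cb.
      have e : s * s * Dd * Cb = s * s * (Cb * Dd) by ring. rewrite e. reflexivity.
    lra.
  have HDd : 0 <= Dd by apply dot_nonneg.
  set q := Rabs Cb * Dd.
  have Hq : 0 <= q by rewrite /q; have := Rabs_pos Cb; nra.
  pose s := - A / (2 * (q + 1)).
  have Hs0 : 0 < s by apply Rdiv_lt_0_compat; lra.
  have H1 := Hs s.
  have H2 : s * (Cb * Dd) <= s * q.
    apply Rmult_le_compat_l; first lra. rewrite /q. apply Rmult_le_compat_r => //. apply Rle_abs.
  have H3 : s * q < - A / 2.
    rewrite /s. have -> : - A / (2 * (q + 1)) * q = (- A / 2) * (q / (q + 1)) by field; lra.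
    have : q / (q + 1) < 1.
      apply (Rmult_lt_reg_r (q + 1)); first lra. rewrite /Rdiv Rmult_assoc Rinv_l; lra.
    have : 0 < - A / 2 by lra.
    set z := q / (q + 1). nra.
  have : s * A + s * s * (Cb * Dd) < 0.
    have : s * (A + s * (Cb * Dd)) < 0.
      have : A + s * (Cb * Dd) < 0 by lra.
      nra.
    move=> h. have -> : s * A + s * s * (Cb * Dd) = s * (A + s * (Cb * Dd)) by ring. exact h.
  lra.
Qed.

End Main.

Theorem mainTheorem3 (n m : nat)
  (f : Vec n -> R) (df : Vec n -> Vec n) (P1 P2 : Vec n -> R)
  (g : 'I_m -> Vec n -> R) (dg : 'I_m -> Vec n -> Vec n)
  (* standing assumptions of (P) *)
  (Hf : has_gradient f df) (Hdf_cont : cont_vec df)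
  (HP1c : convex_fun P1) (HP1cont : cont P1)
  (HP2c : convex_fun P2) (HP2cont : cont P2)
  (Hgcont : forall i, cont (g i))
  (Hfeas : exists x0, feasible g x0)
  (* Assumption A *)
  (Lf_ : R) (HLf : lipschitz_vec df Lf_)
  (Hg : forall i, has_gradient (g i) (dg i))
  (Lg_ : 'I_m -> R) (HLg : forall i, lipschitz_vec (dg i) (Lg_ i))
  (Hlev : level_bounded f P1 P2 g)
  (* Assumption B *)
  (Hdg_cont : forall i, cont_vec (dg i))
  (Hmfcq : MFCQ g dg)
  (* algorithm parameters *)
  (c Lmin Lmax tau : R) (Hc : 0 < c) (HL : 0 < Lmin < Lmax) (Htau : 1 < tau)
  (* the generated sequence *)
  (x xi : nat -> Vec n) (K : nat -> nat)
  (Lft : nat -> nat -> R) (Lgt : nat -> nat -> 'I_m -> R) (xtr : nat -> nat -> Vec n)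
  (Hrun : SCPls_run f df P1 P2 g dg c Lmin Lmax tau x xi K Lft Lgt xtr)
  (* Lagrange multipliers of the accepted subproblems *)
  (lam : nat -> 'I_m -> R)
  (Hlam : forall t, sub_multiplier df P1 g dg (x t) (xi t)
                      (Lft t (K t)) (Lgt t (K t)) (x t.+1) (lam t)) :
  (exists B, forall t, norm (lam t) <= B) /\
  (forall xs, accumulation_point x xs -> stationary f df P1 P2 g dg xs).
Proof.
  have [B HB] := lam_bounded n m f df P1 P2 g dg Hf Hdf_cont HP1cont HP2cont Hgcont
    Lf_ HLf Hg Lg_ HLg Hlev Hdg_cont Hmfcq c Lmin Lmax tau Hc HL Htau
    x xi K Lft Lgt xtr Hrun lam Hlam.
  split; first by exists B.
  apply: (stat_part n m f df P1 P2 g dg Hf Hdf_cont HP1c HP1cont HP2cont Hgcont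
    Lf_ HLf Hg Lg_ HLg Hlev Hdg_cont c Lmin Lmax tau Hc HL Htau
    x xi K Lft Lgt xtr Hrun lam Hlam B).
  move=> t i. eapply Rle_trans; [apply coord_le_norm| exact: HB].
Qed.
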